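(* Let $r>1$ and let $k,\ell,m$ be positive integers with $m\ge 12r$. Let $x_0\in R_1\cup\dots\cup R_\ell$ be an arbitrary reservoir vertex of the $(k,\ell,m)$-megastar and run the Moran process with fitness $r$ on the megastar with initial mutant $x_0$. Then the process goes extinct with probability at least $1/(26r^2\ell)$.
   Context: Moran process: given a directed graph $G$ and fitness $r$, one vertex $x_0$ is a mutant, the rest non-mutants. At each step a vertex $v$ is chosen with probability proportional to fitness (mutants $r$, non-mutants $1$), an out-neighbour $w$ of $v$ is chosen uniformly at random and the state of $v$ is copied to $w$. Extinction: eventually no vertex is a mutant. The $(k,\ell,m)$-megastar: disjoint union of reservoirs $R_1,\dots,R_\ell$ (size $m$), cliques $K_1,\dots,K_\ell$ (size $k$), feeders $a_1,\dots,a_\ell$, and centre $v^*$; edges from $v^*$ to all reservoir vertices, from each vertex of $R_i$ to $a_i$, from $a_i$ to each vertex of $K_i$, both directions between distinct vertices of each $K_i$, and from every clique vertex to $v^*$. *)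

(* Defs.v *)
From mathcomp Require Import all_boot all_order all_algebra.
From mathcomp Require Import classical_sets reals.
Set Implicit Arguments. Unset Strict Implicit. Unset Printing Implicit Defensive.
Import Order.TTheory GRing.Theory Num.Theory.
Local Open Scope ring_scope.

Section Moran.
Variables (R : realType) (T : finType) (E : rel T) (r : R).

Definition outnb (v : T) : {set T} := [set w | E v w].

(* fitness of v in state S (S = set of mutants) *)
Definition fit (S : {set T}) (v : T) : R := if v \in S then r else 1.

Definition total_fit (S : {set T}) : R := \sum_v fit S v.

Definition moran_update (S : {set T}) (v w : T) : {set T} :=
  if v \in S then w |: S else S :\ w.

(* one-step transition probability from S to S'.  (If v had no
   out-neighbour the state would stay put; this never happens in the
   megastar.) *)
Definition moran_trans (S S' : {set T}) : R :=
  \sum_v (fit S v / total_fit S) *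
    (if outnb v == finset.set0 then (S' == S)%:R
     else \sum_(w in outnb v) (#|outnb v|%:R)^-1 * (moran_update S v w == S')%:R).

Definition moran_step (d : {set T} -> R) : {set T} -> R :=
  fun S' => \sum_S d S * moran_trans S S'.

Definition moran_dist (x0 : T) (n : nat) : {set T} -> R :=
  iter n moran_step (fun S => (S == [set x0])%:R).

(* Since the empty state is absorbing, the events {X_n = set0} increase and
   their union has probability sup_n P(X_n = set0). *)
Definition extinction_prob (x0 : T) : R :=
  sup (range (fun n => moran_dist x0 n finset.set0)).

End Moran.

(* vertex type: ((centre + reservoirs) + cliques) + feeders *)
Definition megastar_V (k l m : nat) : finType :=
  (((unit + ('I_l * 'I_m)) + ('I_l * 'I_k)) + 'I_l)%type.

Definition mega_centre {k l m} : megastar_V k l m := inl (inl (inl tt)).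
Definition mega_res {k l m} (i : 'I_l) (j : 'I_m) : megastar_V k l m :=
  inl (inl (inr (i, j))).
Definition mega_clq {k l m} (i : 'I_l) (j : 'I_k) : megastar_V k l m :=
  inl (inr (i, j)).
Definition mega_feeder {k l m} (i : 'I_l) : megastar_V k l m := inr i.

Definition megastar_edge (k l m : nat) : rel (megastar_V k l m) :=
  fun u v =>
    match u, v with
    (* v* -> every reservoir vertex *)
    | inl (inl (inl _)), inl (inl (inr _)) => true
    (* R_i -> a_i *)
    | inl (inl (inr (i, _))), inr i' => i == i'
    (* a_i -> every vertex of K_i *)
    | inr i, inl (inr (i', _)) => i == i'
    (* K_i: both directions between distinct vertices *)
    | inl (inr (i, j)), inl (inr (i', j')) => (i == i') && (j != j')
    (* every clique vertex -> v* *)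
    | inl (inr _), inl (inl (inl _)) => true
    | _, _ => false
    end.

(* Main.v *)
Require Import Defs.
From mathcomp Require Import all_boot all_order all_algebra.
From mathcomp Require Import classical_sets reals.
From mathcomp Require Import ring lra.
Import Order.TTheory GRing.Theory Num.Theory.
Local Open Scope ring_scope.

Module Helpers.
Set Implicit Arguments. Unset Strict Implicit. Unset Printing Implicit Defensive.
Section Gen.
Variables (R : realType) (T : finType) (E : rel T) (r : R).
Hypothesis r_gt0 : 0 < r.
Variable x : T.

Definition inner (S : {set T}) (v : T) (S' : {set T}) : R :=
  if outnb E v == finset.set0 then (S' == S)%:R
  else \sum_(w in outnb E v) (#|outnb E v|%:R)^-1 * (moran_update S v w == S')%:R.

Lemma transE S S' : moran_trans E r S S' =
  \sum_v (fit r S v / total_fit r S) * inner S v S'.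
Proof. by []. Qed.

Lemma sum_eq1 (U : finType) (u : U) : \sum_(y : U) (u == y)%:R = 1 :> R.
Proof.
rewrite (bigD1 u) //= eqxx big1 ?addr0 // => y /negbTE; by rewrite eq_sym => ->.
Qed.

Lemma fit_gt0 (S : {set T}) (v : T) : 0 < fit r S v.
Proof. by rewrite /fit; case: ifP. Qed.

Lemma W_gt0 (S : {set T}) : 0 < total_fit r S.
Proof.
rewrite /total_fit (bigD1 x) //=; apply: ltr_wpDr; last exact: fit_gt0.
by apply: sumr_ge0 => v _; apply: ltW; apply: fit_gt0.
Qed.

Lemma inner_ge0 S v S' : 0 <= inner S v S'.
Proof.
rewrite /inner; case: ifP => _ //; apply: sumr_ge0 => w _.
by apply: mulr_ge0 => //; rewrite invr_ge0.
Qed.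

Lemma card_out_gt0 v : outnb E v != finset.set0 -> 0 < #|outnb E v|%:R :> R.
Proof. by move=> h; rewrite ltr0n card_gt0. Qed.

Lemma inner_sum S v : \sum_S' inner S v S' = 1.
Proof.
have [h|h] := eqVneq (outnb E v) finset.set0; rewrite /inner.
  rewrite h eqxx.
  transitivity (\sum_S' (S == S')%:R :> R); last exact: sum_eq1.
  by apply: eq_bigr => S' _; rewrite eq_sym.
rewrite (negbTE h) exchange_big /=.
rewrite (eq_bigr (fun _ => (#|outnb E v|%:R)^-1)).
  rewrite sumr_const; set N := (#|outnb E v|%:R : R); rewrite -mulr_natr -/N mulVf //.
  by rewrite gt_eqF // card_out_gt0.
by move=> w _; rewrite -mulr_sumr sum_eq1 mulr1.
Qed.

Lemma trans_ge0 S S' : 0 <= moran_trans E r S S'.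
Proof.
rewrite transE; apply: sumr_ge0 => v _; apply: mulr_ge0; last exact: inner_ge0.
by apply: divr_ge0; apply: ltW; [apply: fit_gt0 | apply: W_gt0].
Qed.

Lemma sum_fitW (S : {set T}) : \sum_v fit r S v / total_fit r S = 1.
Proof. by rewrite -mulr_suml mulfV // gt_eqF // W_gt0. Qed.

Lemma trans_sum S : \sum_S' moran_trans E r S S' = 1.
Proof.
rewrite (eq_bigr (fun S' => \sum_v (fit r S v / total_fit r S) * inner S v S'));
  last by move=> *; rewrite transE.
rewrite exchange_big /= -(sum_fitW S); apply: eq_bigr => v _.
by rewrite -mulr_sumr inner_sum mulr1.
Qed.

Lemma dist_ge0 n S : 0 <= moran_dist E r x n S.
Proof.
elim: n S => [|n IH] S /=; first by rewrite /moran_dist /=; case: (_ == _).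
rewrite /moran_dist /= /moran_step; apply: sumr_ge0 => S0 _.
by apply: mulr_ge0; [apply: IH | apply: trans_ge0].
Qed.

Lemma dist_sum n : \sum_S moran_dist E r x n S = 1.
Proof.
elim: n => [|n IH].
  rewrite /moran_dist /=.
  transitivity (\sum_S ([set x] == S)%:R :> R); last exact: sum_eq1.
  by apply: eq_bigr => S _; rewrite eq_sym.
rewrite -[RHS]IH /moran_dist iterS /moran_step exchange_big /=; apply: eq_bigr => S _.
by rewrite -mulr_sumr trans_sum mulr1.
Qed.

Lemma dist_le1 n S : moran_dist E r x n S <= 1.
Proof.
rewrite -(dist_sum n) (bigD1 S) //= lerDl; apply: sumr_ge0 => *; exact: dist_ge0.
Qed.

Lemma trans_lb S S' (c : T -> R) : (forall v, c v <= inner S v S') ->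
  \sum_v fit r S v / total_fit r S * c v <= moran_trans E r S S'.
Proof.
move=> h; rewrite transE; apply: ler_sum => v _; apply: ler_wpM2l => //.
by apply: divr_ge0; apply: ltW; [apply: fit_gt0 | apply: W_gt0].
Qed.

Lemma inner_all S v S' : (exists w, E v w) ->
  (forall w, E v w -> moran_update S v w = S') -> inner S v S' = 1.
Proof.
move=> [w0 hw0] h; rewrite /inner.
have ne : outnb E v != finset.set0.
  by apply/set0Pn; exists w0; rewrite inE.
rewrite (negbTE ne) (eq_bigr (fun _ => (#|outnb E v|%:R)^-1)).
  rewrite sumr_const; set N := (#|outnb E v|%:R : R); rewrite -mulr_natr -/N mulVf //.
  by rewrite gt_eqF // card_out_gt0.
by move=> w; rewrite inE => /h ->; rewrite eqxx mulr1.
Qed.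

Lemma inner_one S v S' w0 : E v w0 -> moran_update S v w0 = S' ->
  (#|outnb E v|%:R)^-1 <= inner S v S'.
Proof.
move=> hw0 h; rewrite /inner.
have ne : outnb E v != finset.set0.
  by apply/set0Pn; exists w0; rewrite inE.
rewrite (negbTE ne) (bigD1 w0) ?inE //= h eqxx mulr1 lerDl.
by apply: sumr_ge0 => w _; apply: mulr_ge0 => //; rewrite invr_ge0.
Qed.

Lemma inner_allbut S v S' w0 : (exists w, E v w) ->
  (forall w, E v w -> w != w0 -> moran_update S v w = S') ->
  1 - (#|outnb E v|%:R)^-1 <= inner S v S'.
Proof.
move=> [w1 hw1] h; rewrite /inner.
have ne : outnb E v != finset.set0.
  by apply/set0Pn; exists w1; rewrite inE.
have hN : 0 < #|outnb E v|%:R :> R by apply: card_out_gt0.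
rewrite (negbTE ne).
set N := (#|outnb E v|%:R : R) in hN *.
rewrite [X in X - _ <= _](_ : 1 = \sum_(w in outnb E v) N^-1); last first.
  by rewrite sumr_const -mulr_natr -/N mulVf // gt_eqF.
case: (boolP (w0 \in outnb E v)) => hin.
  rewrite (bigD1 w0) //= [X in _ <= X](bigD1 w0) //= (addrC (N^-1)) addrK.
  apply: ler_wpDl; first by apply: mulr_ge0 => //; rewrite invr_ge0 ltW.
  apply: ler_sum => w /andP[]; rewrite inE => /h hh /hh ->.
  by rewrite eqxx mulr1.
apply: (le_trans (_ : _ <= \sum_(w in outnb E v) N^-1)).
  by rewrite gerBl invr_ge0 ltW.
apply: ler_sum => w; rewrite inE => hw.
have -> : moran_update S v w = S'.
  by apply: h => //; apply: contraNneq hin => <-; rewrite inE.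
by rewrite eqxx mulr1.
Qed.

End Gen.
Section Abs.
Variables (R : realType) (p q s al be gA gB de : R).
Fixpoint sub (n : nat) : R * R * R :=
  match n with
  | 0 => (0, 1, 0)
  | n.+1 => let: (e, a, b) := sub n in (e + p * a, al * a + s * b, q * a + be * b)
  end.
Definition se n := (sub n).1.1.
Definition sa n := (sub n).1.2.
Definition sb n := (sub n).2.
Lemma seS n : se n.+1 = se n + p * sa n.
Proof. by rewrite /se /sa /=; case: (sub n) => [[]]. Qed.
Lemma saS n : sa n.+1 = al * sa n + s * sb n.
Proof. by rewrite /sb /sa /=; case: (sub n) => [[]]. Qed.
Lemma sbS n : sb n.+1 = q * sa n + be * sb n.
Proof. by rewrite /sb /sa /=; case: (sub n) => [[]]. Qed.

Hypotheses (p0 : 0 <= p) (q0 : 0 <= q) (s0 : 0 <= s) (al0 : 0 <= al) (be0 : 0 <= be).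
Hypotheses (hA : p + q + al <= 1) (hB : s + be <= 1).
Hypotheses (gA0 : 0 <= gA) (gA1 : gA <= 1) (gB0 : 0 <= gB) (gB1 : gB <= 1).
Hypotheses (de0 : 0 < de) (dA : de <= p + al * gA + q * gB - gA)
  (dB : de <= s * gA + be * gB - gB).

Lemma sub_ge0 n : [/\ 0 <= se n, 0 <= sa n & 0 <= sb n].
Proof.
elim: n => [|n [h1 h2 h3]]; first by rewrite /se /sa /sb /=.
rewrite seS saS sbS; split.
- by apply: addr_ge0 => //; apply: mulr_ge0.
- by apply: addr_ge0; apply: mulr_ge0.
- by apply: addr_ge0; apply: mulr_ge0.
Qed.

Lemma sub_le1 n : se n + sa n + sb n <= 1.
Proof.
elim: n => [|n IH]; first by rewrite /se /sa /sb /= add0r addr0.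
have [h1 h2 h3] := sub_ge0 n.
rewrite seS saS sbS; apply: le_trans IH.
have e1 : p * sa n + q * sa n + al * sa n <= sa n.
  by rewrite -!mulrDl ler_piMl.
have e2 : s * sb n + be * sb n <= sb n.
  by rewrite -!mulrDl ler_piMl.
lra.
Qed.

Definition V n := se n + gA * sa n + gB * sb n.

Lemma V_incr n : V n + de * (sa n + sb n) <= V n.+1.
Proof.
have [h1 h2 h3] := sub_ge0 n.
rewrite /V seS saS sbS.
have e1 : de * sa n <= (p + al * gA + q * gB - gA) * sa n by apply: ler_wpM2r.
have e2 : de * sb n <= (s * gA + be * gB - gB) * sb n by apply: ler_wpM2r.
rewrite mulrDr.
have -> : se n + p * sa n + gA * (al * sa n + s * sb n) + gB * (q * sa n + be * sb n) =
  se n + gA * sa n + gB * sb n + ((p + al * gA + q * gB - gA) * sa n +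
     (s * gA + be * gB - gB) * sb n) by ring.
lra.
Qed.

Lemma V_le1 n : V n <= 1.
Proof.
have [h1 h2 h3] := sub_ge0 n.
apply: le_trans (sub_le1 n); rewrite /V lerD // ?lerD2l ?ler_piMl //.
Qed.

Lemma sub_final X : (forall n, se n <= X) -> gA / 2 <= X.
Proof.
move=> hX; case: (lerP (gA / 2) X) => // hlt; exfalso.
have X0 : 0 <= X by apply: le_trans (hX 0%N); rewrite /se.
have gApos : 0 < gA by move: X0 hlt; lra.
have key : forall n, gA + n%:R * (de * (gA / 2)) <= V n.
  elim=> [|n IH]; first by rewrite /V /se /sa /sb /= mul0r; lra.
  apply: le_trans (V_incr n).
  have [h1 h2 h3] := sub_ge0 n.
  have hab : gA / 2 <= sa n + sb n.
    have h4 := hX n.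
    have h5 : gA * sa n <= sa n by rewrite ler_piMl.
    have h6 : gB * sb n <= sb n by rewrite ler_piMl.
    have h7 : 0 <= n%:R * (de * (gA / 2)) :> R.
      by rewrite mulr_ge0 // mulr_ge0 // ?ltW //; lra.
    rewrite /V in IH.
    lra.
  have : de * (gA / 2) <= de * (sa n + sb n) by apply: ler_wpM2l; [exact: ltW | lra].
  have -> : (n.+1)%:R = n%:R + 1 :> R by rewrite -addn1 natrD.
  rewrite mulrDl mul1r; lra.
set K := 2 / (de * gA).
have K0 : 0 <= K by rewrite /K divr_ge0 // ltW // mulr_gt0.
have := archi_boundP K0; set N := Num.Def.archi_bound K => hN.
have := le_trans (key N) (V_le1 N).
have hdg : 0 < de * gA by apply: mulr_gt0.
have : N%:R * (de * (gA / 2)) = N%:R * (de * gA) / 2 by rewrite !mulrA.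
have : K * (de * gA) = 2 by rewrite /K -mulrA mulVf ?mulr1 // gt_eqF.
have : K * (de * gA) < N%:R * (de * gA) by rewrite ltr_pM2r.
lra.
Qed.
End Abs.
Section Mega.
Variables (k l m : nat) (i : 'I_l) (j : 'I_m).
Hypothesis k0 : (0 < k)%N.
Local Notation T := (megastar_V k l m).
Local Notation E := (@megastar_edge k l m).
Local Notation x0 := (@mega_res k l m i j).
Local Notation a := (@mega_feeder k l m i).
Local Notation c := (@mega_centre k l m).

Definition isY (v : T) : bool :=
  match v with inl (inl (inr (i', j'))) => (i' == i) && (j' != j) | _ => false end.

Lemma E_res v i' j' : E v (@mega_res k l m i' j') -> v = c.
Proof. by case: v => [[[[]|[i1 j1]]|[i1 j1]]|i1]. Qed.

Lemma E_feeder v : E v a -> v = x0 \/ isY v.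
Proof.
case: v => [[[[]|[i1 j1]]|[i1 j1]]|i1] //= /eqP ->.
by case: (eqVneq j1 j) => [->|h]; [left | right; rewrite /= eqxx].
Qed.

Lemma E_x0 w : E x0 w -> w = a.
Proof. by case: w => [[[[]|[i1 j1]]|[i1 j1]]|i1] //= /eqP ->. Qed.

Lemma E_Y v w : isY v -> E v w -> w = a.
Proof.
case: v => [[[[]|[i1 j1]]|[i1 j1]]|i1] //= /andP[/eqP -> _].
by case: w => [[[[]|[i2 j2]]|[i2 j2]]|i2] //= /eqP ->.
Qed.

Lemma E_ex v : exists w, E v w.
Proof.
case: v => [[[[]|[i1 j1]]|[i1 j1]]|i1].
- by exists x0.
- by exists (mega_feeder i1 : T); rewrite /= eqxx.
- by exists c.
- by exists (mega_clq i1 (Ordinal k0) : T); rewrite /= eqxx.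
Qed.

Lemma E_c_x0 : E c x0. Proof. by []. Qed.
Lemma x0_neq_c : (x0 == c) = false. Proof. by []. Qed.
Lemma c_neq_x0 : (c == x0) = false. Proof. by []. Qed.
Lemma a_neq_c : (a == c) = false. Proof. by []. Qed.
Lemma a_neq_x0 : (a == x0) = false. Proof. by []. Qed.
Lemma Y_x0 : isY x0 = false. Proof. by rewrite /= !eqxx. Qed.
Lemma Y_a : isY a = false. Proof. by []. Qed.
Lemma Y_c : isY c = false. Proof. by []. Qed.


Lemma upd_out (S : {set T}) v w : v \notin S -> w \notin S -> moran_update S v w = S.
Proof.
move=> hv hw; rewrite /moran_update (negbTE hv); apply/setP => y; rewrite !inE.
by case: eqP => // ->; rewrite (negbTE hw).
Qed.

Lemma upd_in (S : {set T}) v w : v \in S -> w \in S -> moran_update S v w = S.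
Proof.
move=> hv hw; rewrite /moran_update hv; apply/setP => y; rewrite !inE.
by case: eqP => // ->; rewrite hw.
Qed.

Variables (R : realType).
Local Notation A := ([set x0] : {set T}).
Local Notation B := ([set x0; a] : {set T}).
Local Notation Z := (finset.set0 : {set T}).
Local Notation N := (#|outnb E c|%:R : R).
Local Notation inn := (inner R E).

Definition cAZ (v : T) : R := (v == c)%:R * N^-1.
Definition cAB (v : T) : R := (v == x0)%:R.
Definition cAA (v : T) : R := 1 - (v == x0)%:R - (v == c)%:R * N^-1.
Definition cBA (v : T) : R := (isY v)%:R.
Definition cBB (v : T) : R := 1 - (isY v)%:R - (v == a)%:R - (v == c)%:R * N^-1.

Lemma iZZ v : 1 <= inn Z v Z.
Proof. by rewrite (inner_all _ (E_ex v)) // => w _; rewrite upd_out ?inE. Qed.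

Lemma iAZ v : cAZ v <= inn A v Z.
Proof.
rewrite /cAZ; case: eqP => [->|_]; last by rewrite mul0r inner_ge0.
rewrite mul1r; apply: (inner_one _ E_c_x0).
rewrite /moran_update inE c_neq_x0; apply/setP => y; rewrite !inE.
by case: (y == x0).
Qed.

Lemma iAB v : cAB v <= inn A v B.
Proof.
rewrite /cAB; case: eqP => [->|_]; last by rewrite inner_ge0.
rewrite (inner_all _ (E_ex x0)) // => w /E_x0 ->.
by rewrite /moran_update inE eqxx; apply/setP => y; rewrite !inE orbC.
Qed.

Lemma iAA v : cAA v <= inn A v A.
Proof.
rewrite /cAA; case: (eqVneq v x0) => [->|hx].
  by rewrite x0_neq_c mul0r subr0 subrr inner_ge0.
case: (eqVneq v c) => [->|hc].
  rewrite subr0 mul1r; apply: (inner_allbut _ (w0 := x0)); first exact: E_ex.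
  by move=> w _ hw; rewrite upd_out ?inE.
rewrite !mul0r !subr0 (inner_all _ (E_ex v)) // => w hw.
rewrite upd_out ?inE //.
by apply: contra_neq hc => hwx; move: hw; rewrite hwx => /E_res.
Qed.

Lemma iBA v : cBA v <= inn B v A.
Proof.
rewrite /cBA; case: (boolP (isY v)) => hy; last by rewrite inner_ge0.
rewrite (inner_all _ (E_ex v)) // => w /(E_Y hy) ->.
have hvB : v \notin B.
  rewrite !inE; apply/norP; split; apply/eqP => hv; move: hy; rewrite hv //.
  by rewrite Y_x0.
rewrite /moran_update (negbTE hvB); apply/setP => y; rewrite !inE.
case: (eqVneq y a) => [->|hya]; first by rewrite a_neq_x0.
by rewrite /= orbF.
Qed.

Lemma iBB v : cBB v <= inn B v B.
Proof.
rewrite /cBB; case: (boolP (isY v)) => hy.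
  have -> : (v == a) = false by apply/eqP => hv; move: hy; rewrite hv.
  have -> : (v == c) = false by apply/eqP => hv; move: hy; rewrite hv.
  by rewrite mul0r !subr0 subrr inner_ge0.
rewrite subr0; case: (eqVneq v a) => [->|ha].
  by rewrite a_neq_c mul0r subr0 subrr inner_ge0.
rewrite subr0; case: (eqVneq v c) => [->|hc].
  rewrite mul1r; apply: (inner_allbut _ (w0 := x0)); first exact: E_ex.
  move=> w hw hwx; rewrite upd_out ?inE //; apply/norP; split => //.
  by apply/eqP => hwa; move: hw; rewrite hwa.
rewrite mul0r subr0 (inner_all _ (E_ex v)) // => w hw.
case: (eqVneq v x0) => [hvx|hvx].
  by move: hw; rewrite hvx => /E_x0 ->; apply: upd_in; rewrite !inE eqxx ?orbT.
rewrite upd_out ?inE ?(negbTE hvx) ?(negbTE ha) //.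
apply/norP; split.
  by apply: contra_neq hc => hwx; move: hw; rewrite hwx => /E_res.
apply/eqP => hwa; move: hw; rewrite hwa => /E_feeder [] //.
  by move=> hv; move: hvx; rewrite hv eqxx.
by rewrite (negbTE hy).
Qed.


Lemma sum_pick (F : T -> R) y : \sum_v F v * (v == y)%:R = F y.
Proof.
rewrite (bigD1 y) //= eqxx mulr1 big1 ?addr0 // => v /negbTE ->; exact: mulr0.
Qed.

Lemma sum_pick2 (F : T -> R) y K : \sum_v F v * ((v == y)%:R * K) = F y * K.
Proof.
rewrite -sum_pick mulr_suml; apply: eq_bigr => v _; rewrite mulrA; ring.
Qed.

Definition Mv : R := \sum_(v : T) (isY v)%:R.

Lemma Mv_card : Mv = (m.-1)%:R.
Proof.
rewrite /Mv (eq_bigr (fun v => if isY v then 1 else 0)); last by move=> v _; case: isY.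
rewrite -big_mkcond /=.
transitivity ((\sum_(v : T | isY v) 1%N)%:R : R); first by rewrite natr_sum.
rewrite sum1dep_card.
set Ys := [set v : T | isY v].
have -> : Ys = (fun j' => @mega_res k l m i j') @: [set~ j].
  apply/setP => v; rewrite inE; apply/idP/imsetP.
    case: v => [[[[]|[i1 j1]]|[i1 j1]]|i1] //= /andP[/eqP -> hj].
    by exists j1; rewrite // !inE.
  by move=> [j1]; rewrite !inE => hj ->; rewrite /= eqxx hj.
rewrite card_imset ?cardsC1 ?card_ord //.
by move=> j1 j2 [].
Qed.

Variable r : R.
Hypothesis r0 : 0 < r.
Local Notation W S := (total_fit r S).

Lemma trans_lb' S S' (cf : T -> R) : (forall v, cf v <= inn S v S') ->
  \sum_v fit r S v / W S * cf v <= moran_trans E r S S'.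
Proof. by move=> h; exact: (@trans_lb R T E r r0 x0 S S' cf h). Qed.

Lemma tZZ : 1 <= moran_trans E r Z Z.
Proof.
apply: le_trans (trans_lb' (cf := fun _ => 1) iZZ).
by rewrite (eq_bigr (fun v => fit r Z v / W Z)) ?(sum_fitW r0 x0) // => v _; rewrite mulr1.
Qed.

Lemma tAZ : N^-1 / W A <= moran_trans E r A Z.
Proof.
apply: le_trans (trans_lb' iAZ); rewrite /cAZ sum_pick2 /fit inE c_neq_x0.
by rewrite mul1r mulrC.
Qed.

Lemma tAB : r / W A <= moran_trans E r A B.
Proof.
by apply: le_trans (trans_lb' iAB); rewrite /cAB sum_pick /fit inE eqxx.
Qed.

Lemma tAA : 1 - r / W A - N^-1 / W A <= moran_trans E r A A.
Proof.
apply: le_trans (trans_lb' iAA); rewrite /cAA.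
rewrite (eq_bigr (fun v => fit r A v / W A - fit r A v / W A * (v == x0)%:R
   - fit r A v / W A * ((v == c)%:R * N^-1))); last by move=> v _; rewrite !mulrBr mulr1.
rewrite !sumrB (sum_fitW r0 x0) sum_pick sum_pick2 /fit !inE eqxx c_neq_x0.
by rewrite mul1r [_^-1 * _^-1]mulrC.
Qed.

Lemma sumY (F : T -> R) : (forall v, isY v -> F v = 1) ->
  \sum_v F v * (isY v)%:R = Mv.
Proof.
move=> h; rewrite /Mv; apply: eq_bigr => v _; case: (boolP (isY v)) => hy.
  by rewrite h // mul1r.
by rewrite mulr0.
Qed.

Lemma fitB_Y v : isY v -> fit r B v = 1.
Proof.
move=> hy; rewrite /fit !inE.
case: (eqVneq v x0) => [hv|]; first by move: hy; rewrite hv Y_x0.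
case: (eqVneq v a) => [hv|] //; by move: hy; rewrite hv.
Qed.

Lemma tBA : Mv / W B <= moran_trans E r B A.
Proof.
apply: le_trans (trans_lb' iBA); rewrite /cBA.
rewrite (eq_bigr (fun v => (W B)^-1 * (fit r B v * (isY v)%:R))); last first.
  by move=> v _; rewrite mulrA (mulrC (W B)^-1).
rewrite -mulr_sumr sumY; first by rewrite [X in _ <= X]mulrC.
by move=> v hy; exact: fitB_Y.
Qed.

Lemma tBB : 1 - Mv / W B - r / W B - N^-1 / W B <= moran_trans E r B B.
Proof.
apply: le_trans (trans_lb' iBB); rewrite /cBB.
rewrite (eq_bigr (fun v => fit r B v / W B - (W B)^-1 * (fit r B v * (isY v)%:R)
   - fit r B v / W B * (v == a)%:R
   - fit r B v / W B * ((v == c)%:R * N^-1))); last first.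
  move=> v _; rewrite !mulrBr mulr1; congr (_ - _ - _ - _).
  by rewrite mulrA (mulrC (W B)^-1).
rewrite !sumrB (sum_fitW r0 x0) sum_pick sum_pick2 -mulr_sumr sumY; last by move=> v; exact: fitB_Y.
by rewrite /fit !inE eqxx orbT /= mul1r (mulrC (W _)^-1 Mv) [_^-1 * _^-1]mulrC.
Qed.


Lemma sum_ge2 (U : finType) (F : U -> R) (y z : U) : y != z ->
  (forall v, 0 <= F v) -> F y + F z <= \sum_v F v.
Proof.
move=> hyz h; rewrite (bigD1 y) //= (bigD1 z) /=; last by rewrite eq_sym.
rewrite addrA lerDl.
by apply: sumr_ge0.
Qed.

Lemma sum_ge3 (U : finType) (F : U -> R) (x y z : U) : x != y -> x != z -> y != z ->
  (forall v, 0 <= F v) -> F x + F y + F z <= \sum_v F v.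
Proof.
move=> hxy hxz hyz h; rewrite (bigD1 x) //= (bigD1 y) /=; last by rewrite eq_sym.
rewrite (bigD1 z) /=; last by rewrite (eq_sym z x) (eq_sym z y) hxz hyz.
by rewrite !addrA lerDl; apply: sumr_ge0.
Qed.

Lemma fit_ge0 (S : {set T}) (v : T) : 0 <= fit r S v.
Proof. by rewrite /fit; case: ifP => _; rewrite ?ler01 ?ltW. Qed.

Lemma WA_ge : r + 1 <= W A.
Proof.
have := sum_ge2 (F := fit r A) (y := x0) (z := c) isT (fit_ge0 A).
by rewrite /fit !inE eqxx c_neq_x0.
Qed.

Lemma WB_ge : Mv + r + 1 <= W B.
Proof.
have e : W B = \sum_v fit r B v * (isY v)%:R + \sum_v fit r B v * (1 - (isY v)%:R).
  by rewrite -big_split /=; apply: eq_bigr => v _; rewrite -mulrDr addrC subrK mulr1.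
rewrite e sumY; last by move=> v; exact: fitB_Y.
rewrite -addrA lerD2l.
have := sum_ge2 (F := fun v => fit r B v * (1 - (isY v)%:R)) (y := a) (z := c) isT.
rewrite Y_a Y_c /fit !inE eqxx orbT /= !subr0 !mulr1; apply.
move=> v; apply: mulr_ge0; first exact: fit_ge0.
by case: isY; rewrite ?subrr ?subr0.
Qed.

Lemma N_ge1 : 1 <= N.
Proof.
rewrite ler1n card_gt0; apply/set0Pn; exists x0; rewrite inE; exact: E_c_x0.
Qed.

Lemma N_le : N <= (l * m)%:R.
Proof.
rewrite ler_nat.
apply: (@leq_trans #|(fun p : 'I_l * 'I_m => @mega_res k l m p.1 p.2) @: [set: 'I_l * 'I_m]|).
  apply: subset_leq_card; apply/fintype.subsetP => v; rewrite inE.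
  case: v => [[[[]|[i1 j1]]|[i1 j1]]|i1] // _.
  by apply/imsetP; exists (i1, j1).
by apply: leq_trans (leq_imset_card _ _) _; rewrite cardsT card_prod !card_ord.
Qed.

Lemma dist0 S : moran_dist E r x0 0 S = (S == A)%:R.
Proof. by []. Qed.

Lemma distS n S' : moran_dist E r x0 n.+1 S' =
  \sum_S moran_dist E r x0 n S * moran_trans E r S S'.
Proof. by []. Qed.

End Mega.
End Helpers.
Import Helpers.

Theorem lemma7p2 (R : realType) (r : R) (k l m : nat) (i : 'I_l) (j : 'I_m) :
  1 < r -> (0 < k)%N -> (0 < l)%N -> (0 < m)%N -> 12 * r <= m%:R ->
  1 / (26 * r ^+ 2 * l%:R) <=
    extinction_prob (@megastar_edge k l m) r (mega_res i j).
Proof.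
move=> r1 k0 l0 m0 hm.
have r0 : 0 < r by apply: lt_trans r1.
pose A : {set megastar_V k l m} := [set mega_res i j].
pose B : {set megastar_V k l m} := [set mega_res i j; mega_feeder i].
pose N := (#|outnb (@megastar_edge k l m) mega_centre|%:R : R).
pose WA := total_fit r A. pose WB := total_fit r B.
pose M := Mv k i j R.
pose u := N^-1.
pose p := u / WA. pose q := r / WA. pose al := 1 - r / WA - u / WA.
pose s := M / WB. pose be := 1 - M / WB - r / WB - u / WB.
pose L := (l%:R : R). pose mR := (m%:R : R).
have hN1 : 1 <= N by exact: (N_ge1 k i j R).
have hNle : N <= L * mR by rewrite /L /mR -natrM; exact: (N_le k l m R).
have hWA : r + 1 <= WA by exact: (WA_ge k i j r0).
have hWB : M + r + 1 <= WB by exact: (WB_ge k i j r0).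
have hM : mR = M + 1 by rewrite /M Mv_card /mR natr1 prednK.
have hL : 1 <= L by rewrite /L ler1n.
have hu0 : 0 < u by rewrite /u invr_gt0; lra.
have hu1 : u <= 1 by rewrite /u invr_le1 ?unitfE; lra.
have WA0 : 0 < WA by lra.
have WB0 : 0 < WB by lra.
have M0 : 12 * r - 1 <= M by lra.
pose gA := (13 * r ^+ 2 * L)^-1.
have hr2 : 1 <= r ^+ 2 by rewrite expr2; nra.
have hden : 13 <= 13 * r ^+ 2 * L by nra.
have gA0 : 0 < gA by rewrite /gA invr_gt0; lra.
have gA13 : gA <= 13^-1.
  rewrite /gA lef_pV2 ?posrE //; lra.
pose eta := 2 * (r + 1) / M.
have Mpos : 0 < M by lra.
have hMeta : M * eta = 2 * (r + 1) by rewrite /eta mulrCA mulfV ?mulr1 // gt_eqF.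
have eta0 : 0 <= eta by rewrite /eta divr_ge0 //; lra.
have eta1 : eta <= 1 by rewrite /eta ler_pdivrMr //; lra.
pose gB := gA * (1 - eta).
pose D1 := u - (u + r) * gA + r * gB.
pose D2 := M * gA - (M + r + u) * gB.
have eD1 : p + al * gA + q * gB - gA = D1 / WA by rewrite /p /q /al /D1; ring.
have eD2 : s * gA + be * gB - gB = D2 / WB by rewrite /s /be /D2; ring.
have D2pos : 0 < D2.
  have -> : D2 = gA * (M * eta - (r + u) * (1 - eta)) by rewrite /D2 /gB; ring.
  rewrite hMeta; apply: mulr_gt0 => //.
  have : (r + u) * (1 - eta) <= (r + 1) * 1.
    apply: ler_pM; lra.
  lra.
have D1pos : 0 < D1.
  have e1 : D1 = u * (1 - gA) - 2 * (r + 1) / (13 * r * L * M).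
    rewrite /D1 /gB /gA -hMeta /eta.
    field; rewrite ?gt_eqF //; lra.
  have LmR0 : 0 < L * mR by nra.
  have hv : (L * mR)^-1 <= u by rewrite /u lef_pV2 ?posrE //; lra.
  have h1 : (L * mR)^-1 * (12 / 13) <= u * (1 - gA).
    apply: ler_pM; [by rewrite invr_ge0 ltW | lra | exact: hv | lra].
  have hnum : 0 < 12 * r * M - 2 * (r + 1) * mR by rewrite hM; nra.
  have h2 : (L * mR)^-1 * (12 / 13) - 2 * (r + 1) / (13 * r * L * M) =
    (12 * r * M - 2 * (r + 1) * mR) / (13 * r * L * M * mR).
    field; rewrite ?gt_eqF //; lra.
  have h3 : 0 < (12 * r * M - 2 * (r + 1) * mR) / (13 * r * L * M * mR).
    apply: divr_gt0 => //; rewrite !mulr_gt0 //; lra.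
  lra.
pose de := Order.min (D1 / WA) (D2 / WB).
have de0 : 0 < de.
  rewrite /de lt_min; apply/andP; split. exact: (divr_gt0 D1pos WA0). exact: (divr_gt0 D2pos WB0).
have -> : 1 / (26 * r ^+ 2 * l%:R) = gA / 2.
  rewrite /gA -/L; field; rewrite ?gt_eqF //; lra.
have p0 : 0 <= p by rewrite /p divr_ge0 // ltW.
have q0 : 0 <= q by rewrite /q divr_ge0 // ltW.
have s0 : 0 <= s by rewrite /s divr_ge0 // ltW.
have al0 : 0 <= al.
  have h : r / WA + u / WA <= 1 by rewrite -mulrDl ler_pdivrMr // mul1r; lra.
  rewrite /al; lra.
have be0 : 0 <= be.
  have h : M / WB + r / WB + u / WB <= 1 by rewrite -!mulrDl ler_pdivrMr // mul1r; lra.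
  rewrite /be; lra.
have hA : p + q + al <= 1 by rewrite /p /q /al; lra.
have hB : s + be <= 1.
  have h : 0 <= r / WB + u / WB by rewrite -mulrDl divr_ge0 //; lra.
  rewrite /s /be; lra.
have gA1 : gA <= 1 by lra.
have gB1 : gB <= 1 by rewrite /gB; nra.
have dA : de <= p + al * gA + q * gB - gA by rewrite eD1 /de ge_min lexx.
have dB : de <= s * gA + be * gB - gB by rewrite eD2 /de ge_min lexx orbT.
apply: (sub_final p0 q0 s0 al0 be0 hA hB gA1 gB1 de0 dA dB).
pose d n S := moran_dist (@megastar_edge k l m) r (mega_res i j) n S.
have hZA : (finset.set0 : {set megastar_V k l m}) != A.
  by apply/eqP => /setP /(_ (mega_res i j)); rewrite !inE eqxx.
have hZB : (finset.set0 : {set megastar_V k l m}) != B.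
  by apply/eqP => /setP /(_ (mega_res i j)); rewrite !inE eqxx.
have hAB : A != B.
  by apply/eqP => /setP /(_ (mega_feeder i)); rewrite !inE eqxx orbT.
have dge0 n S : 0 <= d n S by apply: dist_ge0.
have nn n S' : forall S, 0 <= d n S * moran_trans (@megastar_edge k l m) r S S'.
  move=> S; apply: mulr_ge0; [exact: dge0 | exact: (trans_ge0 _ r0 (mega_res i j))].
have dom : forall n, [/\ se p q s al be n <= d n finset.set0,
   sa p q s al be n <= d n A & sb p q s al be n <= d n B].
  elim=> [|n [h1 h2 h3]].
    rewrite /se /sa /sb /d /= /moran_dist /= eqxx; split => //; apply: ler0n.
  have [g1 g2 g3] := sub_ge0 p0 q0 s0 al0 be0 n.
  split.
  - rewrite seS /d distS -/(d n).
    have := sum_ge3 (F := fun S => d n S * moran_trans (@megastar_edge k l m) r S finset.set0) hZA hZB hAB (nn n _).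
    have t1 := tZZ i j k0 r0.
    have t2 := tAZ k i j r0.
    have e1 : se p q s al be n * 1 <= d n finset.set0 * moran_trans (@megastar_edge k l m) r finset.set0 finset.set0.
      by apply: ler_pM.
    have e2 : sa p q s al be n * p <= d n A * moran_trans (@megastar_edge k l m) r A finset.set0.
      by apply: ler_pM.
    have e3 : 0 <= d n B * moran_trans (@megastar_edge k l m) r B finset.set0 by apply: nn.
    lra.
  - rewrite saS /d distS -/(d n).
    have := sum_ge3 (F := fun S => d n S * moran_trans (@megastar_edge k l m) r S A) hZA hZB hAB (nn n _).
    have t1 := tAA i j k0 r0.
    have t2 := tBA i j k0 r0.
    have e1 : sa p q s al be n * al <= d n A * moran_trans (@megastar_edge k l m) r A A.
      by apply: ler_pM.
    have e2 : sb p q s al be n * s <= d n B * moran_trans (@megastar_edge k l m) r B A.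
      by apply: ler_pM.
    have e3 : 0 <= d n finset.set0 * moran_trans (@megastar_edge k l m) r finset.set0 A by apply: nn.
    lra.
  - rewrite sbS /d distS -/(d n).
    have := sum_ge3 (F := fun S => d n S * moran_trans (@megastar_edge k l m) r S B) hZA hZB hAB (nn n _).
    have t1 := tAB i j k0 r0.
    have t2 := tBB i j k0 r0.
    have e1 : sa p q s al be n * q <= d n A * moran_trans (@megastar_edge k l m) r A B.
      by apply: ler_pM.
    have e2 : sb p q s al be n * be <= d n B * moran_trans (@megastar_edge k l m) r B B.
      by apply: ler_pM.
    have e3 : 0 <= d n finset.set0 * moran_trans (@megastar_edge k l m) r finset.set0 B by apply: nn.
    lra.
move=> n; have [h _ _] := dom n; apply: le_trans h _.
apply: ub_le_sup; last by exists n.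
exists 1 => y [n' _ <-]; exact: dist_le1.
Qed.
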